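(* Let $F_X,F_Y$ be univariate distributions. The set $\mathfrak{Q}^{F_X,F_Y}$ of all bivariate quasi-distributions with margins $F_X,F_Y$ and the set $\mathfrak{D}^{F_X,F_Y}$ of all bivariate distributions with margins $F_X,F_Y$ are compact in the uniform norm (supremum norm on functions on $\overline{\mathbb{R}}^2$).
   Context: $\overline{\mathbb{R}}=\mathbb{R}\cup\{-\infty,\infty\}$. A univariate distribution is a nondecreasing function $G:\overline{\mathbb{R}}\to[0,1]$ with $G(-\infty)=0$, $G(\infty)=1$ (not necessarily right continuous). The volume of a rectangle $[x_1,x_2]\times[y_1,y_2]$ with respect to $F$ is $F(x_1,y_1)+F(x_2,y_2)-F(x_2,y_1)-F(x_1,y_2)$. A bivariate quasi-distribution is $F:\overline{\mathbb{R}}^2\to[0,1]$ with $F(x,-\infty)=F(-\infty,y)=0$, $F(\infty,\infty)=1$, and nonnegative volume for every rectangle with corners in $\overline{\mathbb{R}}^2$ intersecting the boundary (points with a coordinate $\pm\infty$); a bivariate distribution additionally has nonnegative volume for every rectangle. Its margins are $F(\cdot,\infty)$ and $F(\infty,\cdot)$. *)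

(* Defs.v *)
From HB Require Import structures.
From mathcomp Require Import all_boot all_order all_algebra.
From mathcomp Require Import all_classical all_reals all_analysis.
Set Implicit Arguments. Unset Strict Implicit. Unset Printing Implicit Defensive.
Import Order.TTheory GRing.Theory Num.Theory.
Import numFieldNormedType.Exports.
Local Open Scope classical_set_scope.
Local Open Scope ring_scope.

(* Univariate distribution: nondecreasing G : \bar R -> [0,1],
   G(-oo) = 0, G(+oo) = 1 (not necessarily right continuous). *)
Definition univ_dist (R : realType) (G : \bar R -> R) : Prop :=
  [/\ (forall x, 0 <= G x <= 1),
      (forall x y : \bar R, (x <= y)%E -> G x <= G y),
      G -oo%E = 0 & G +oo%E = 1].

Definition volume2 (R : realType) (F : \bar R * \bar R -> R)
  (x1 x2 y1 y2 : \bar R) : R :=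
  F (x1, y1) + F (x2, y2) - F (x2, y1) - F (x1, y2).

Definition meets_boundary (R : realType) (x1 x2 y1 y2 : \bar R) : Prop :=
  ~ [/\ x1 \is a fin_num, x2 \is a fin_num, y1 \is a fin_num & y2 \is a fin_num].

Definition quasi_dist (R : realType) (F : \bar R * \bar R -> R) : Prop :=
  [/\ (forall p, 0 <= F p <= 1),
      (forall x, F (x, -oo%E) = 0),
      (forall y, F (-oo%E, y) = 0),
      F (+oo%E, +oo%E) = 1 &
      (forall x1 x2 y1 y2 : \bar R, (x1 <= x2)%E -> (y1 <= y2)%E ->
         meets_boundary x1 x2 y1 y2 -> 0 <= volume2 F x1 x2 y1 y2)].

Definition biv_dist (R : realType) (F : \bar R * \bar R -> R) : Prop :=
  quasi_dist F /\
  (forall x1 x2 y1 y2 : \bar R, (x1 <= x2)%E -> (y1 <= y2)%E ->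
     0 <= volume2 F x1 x2 y1 y2).

Definition has_margins (R : realType) (F : \bar R * \bar R -> R)
  (FX FY : \bar R -> R) : Prop :=
  (forall x, F (x, +oo%E) = FX x) /\ (forall y, F (+oo%E, y) = FY y).

Definition QSet (R : realType) (FX FY : \bar R -> R) :
  set {uniform (\bar R * \bar R) -> R} :=
  [set F | quasi_dist F /\ has_margins F FX FY].

Definition DSet (R : realType) (FX FY : \bar R -> R) :
  set {uniform (\bar R * \bar R) -> R} :=
  [set F | biv_dist F /\ has_margins F FX FY].

(* Main.v *)
Require Import Defs.
From HB Require Import structures.
From mathcomp Require Import all_boot all_order all_algebra.
From mathcomp Require Import all_classical all_reals all_analysis.
From mathcomp Require Import lra.
Import Order.TTheory GRing.Theory Num.Theory.
Import numFieldNormedType.Exports.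
Local Open Scope classical_set_scope.
Local Open Scope ring_scope.

Section S.
Variable R : realType.
Local Notation X := (\bar R * \bar R)%type.

Lemma ev_cvg (U : set_system {uniform X -> R}) (S : set {uniform X -> R}) p :
  UltraFilter U -> U S -> (forall f, S f -> 0 <= f p <= 1) ->
  exists c : R, (fun f : {uniform X -> R} => f p) @ U --> c.
Proof.
move=> UU US Sb.
have := @segment_compact R 0 1.
move/(_ ((fun f : {uniform X -> R} => f p) @ U) _ _).
case.
- apply: (@filterS _ U _ S) US => f /Sb H /=; rewrite in_itv; exact: H.
move=> c [_ cl]; exists c => B nB.
case: (in_ultra_setVsetC ((fun f : {uniform X -> R} => f p) @^-1` B) UU) => // H.
by have [z [zB' zB]] := cl (~` B) B H nB.
Qed.

Definition rep (G : \bar R -> R) (N : nat) (k : nat) : \bar R :=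
  xget -oo%E [set z | `|G z - k%:R / N%:R| <= N%:R^-1].

Lemma net (G : \bar R -> R) N : (0 < N)%N -> (forall x, 0 <= G x <= 1) ->
  forall x, exists k : 'I_N.+1, `|G x - G (rep G N k)| <= 2 / N%:R.
Proof.
move=> N0 Gb x.
have Nr : 0 < N%:R :> R by rewrite ltr0n.
have [G0 G1] := andP (Gb x).
have t0 : 0 <= G x * N%:R by rewrite mulr_ge0.
have kN : (Num.truncn (G x * N%:R) < N.+1)%N.
  rewrite ltnS truncn_le_nat.
  by apply: (le_lt_trans (ler_wpM2r (ltW Nr) G1)); rewrite mul1r ltr_nat.
exists (Ordinal kN) => /=.
set k := Num.truncn _ in kN *.
have [tl tu] := andP (truncn_itv t0).
have H1 : `|G x - k%:R / N%:R| <= N%:R^-1.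
  rewrite ger0_norm; last first.
    by rewrite subr_ge0 ler_pdivrMr.
  rewrite lerBlDr.
  have -> : N%:R^-1 + k%:R / N%:R = (k.+1)%:R / N%:R :> R by rewrite -natr1 mulrDl mul1r addrC.
  rewrite ler_pdivlMr //; exact: ltW.
have := xgetPex -oo%E (ex_intro _ x H1 : exists z, `|G z - k%:R / N%:R| <= N%:R^-1).
rewrite -/(rep G N k) => H2.
rewrite (le_trans (ler_distD (k%:R / N%:R) _ _)) //.
rewrite distrC in H2.
have -> : 2 / N%:R = N%:R^-1 + N%:R^-1 :> R by rewrite -mulr2n mulr_natl -mulr_natl.
exact: lerD.
Qed.

Lemma compactS (FX FY : \bar R -> R) (S : set {uniform X -> R}) :
  (forall x, 0 <= FX x <= 1) -> (forall y, 0 <= FY y <= 1) ->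
  (forall f, S f -> forall p, 0 <= f p <= 1) ->
  (forall f, S f -> forall p q : X,
     `|f p - f q| <= `|FX p.1 - FX q.1| + `|FY p.2 - FY q.2|) ->
  (forall (U : set_system {uniform X -> R}) (g : X -> R), ProperFilter U -> U S ->
     (forall p, (fun f : {uniform X -> R} => f p) @ U --> g p) -> S g) ->
  compact S.
Proof.
move=> FXb FYb Sb SL Scl.
rewrite compact_ultra => U UU US.
have ev p := ev_cvg U S p UU US (fun f Sf => Sb f Sf p).
pose g p := xget 0 [set c : R | (fun f : {uniform X -> R} => f p) @ U --> c].
have gc p : (fun f : {uniform X -> R} => f p) @ U --> g p by exact: (xgetPex 0 (ev p)).
have Sg : S g by exact: (Scl U g _ US gc).
exists g; split => //.
move=> P /uniform_nbhs [E [entE subP]].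
apply: (filterS subP).
move: entE; rewrite -entourage_from_ballE => -[e /= e0 subE].
pose N := (Num.truncn (16 / e)).+1.
have N0 : (0 < N)%N by [].
have Nr : 0 < N%:R :> R by rewrite ltr0n.
have eN : 16 * N%:R^-1 < e.
  have := truncnS_gt (16 / e); rewrite -/N ltr_pdivrMr // => h.
  by rewrite ltr_pdivrMr // mulrC.
pose r (km : 'I_N.+1 * 'I_N.+1) : X := (rep FX N km.1, rep FY N km.2).
have : \forall h \near U, S h /\ forall km, `|g (r km) - h (r km)| < e / 2.
  apply: filterI => //; apply: filter_forall => km.
  by move/cvgrPdist_lt : (gc (r km)) => /(_ (e / 2)); apply; rewrite divr_gt0.
apply: filterS => h [Sh hr] y _; apply: subE => /=.
rewrite /ball /=.
have [k Hk] := net FX N N0 FXb y.1.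
have [m Hm] := net FY N N0 FYb y.2.
have Lg := SL g Sg y (r (k, m)).
have Lh := SL h Sh (r (k, m)) y.
have Hr := hr (k, m).
have H1 := ler_distD (h (r (k, m))) (g y) (h y).
have H2 := ler_distD (g (r (k, m))) (g y) (h (r (k, m))).
rewrite /r /= in Lg Lh Hr H1 H2.
rewrite [`|FX (rep FX N k) - _|]distrC [`|FY (rep FY N m) - _|]distrC in Lh.
move: eN Hk Hm Lg Lh Hr H1 H2.
rewrite distrC.
set a := N%:R^-1.
rewrite /(_ / _).
set A := `|FX _ - _|. set B := `|FY _ - _|.
set C := `|g y - _|. set D := `|h _ - _|. set C2 := `|g _ - h _|. set D2 := `|g y - h _|.
move=> eN Hk Hm Lg Lh Hr H1 H2.
have eN2 : 16 * a < e := eN.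
clear eN; lra.
Qed.

Lemma lip_x (F : X -> R) FX FY : quasi_dist F -> has_margins F FX FY ->
  forall x1 x2 y, `|F (x1, y) - F (x2, y)| <= `|FX x1 - FX x2|.
Proof.
move=> [Fb Fx Fy F1 Fv] [mX mY].
suff H : forall x1 x2 y, (x1 <= x2)%E -> `|F (x1, y) - F (x2, y)| <= `|FX x1 - FX x2|.
  move=> x1 x2 y; case: (leP x1 x2) => [|/ltW] h; first exact: H.
  by rewrite distrC [`|FX _ - _|]distrC; exact: H.
move=> x1 x2 y le12.
have v1 := Fv x1 x2 y +oo%E le12 (leey y) ltac:(by case).
have v2 := Fv x1 x2 -oo%E y le12 (leNye y) ltac:(by case).
move: v1 v2; rewrite /volume2 !mX Fx Fx => v1 v2.
have n1 := ler_norm (FX x2 - FX x1).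
rewrite distrC in n1.
rewrite ler0_norm; last by lra.
lra.
Qed.

Lemma lip_y (F : X -> R) FX FY : quasi_dist F -> has_margins F FX FY ->
  forall x y1 y2, `|F (x, y1) - F (x, y2)| <= `|FY y1 - FY y2|.
Proof.
move=> [Fb Fx Fy F1 Fv] [mX mY].
suff H : forall x y1 y2, (y1 <= y2)%E -> `|F (x, y1) - F (x, y2)| <= `|FY y1 - FY y2|.
  move=> x y1 y2; case: (leP y1 y2) => [|/ltW] h; first exact: H.
  by rewrite distrC [`|FY _ - _|]distrC; exact: H.
move=> x y1 y2 le12.
have v1 := Fv x +oo%E y1 y2 (leey x) le12 ltac:(by case).
have v2 := Fv -oo%E x y1 y2 (leNye x) le12 ltac:(by case).
move: v1 v2; rewrite /volume2 !mY Fy Fy => v1 v2.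
have n1 := ler_norm (FY y2 - FY y1).
rewrite distrC in n1.
rewrite ler0_norm; last by lra.
lra.
Qed.

Lemma lipQ (F : X -> R) FX FY : quasi_dist F -> has_margins F FX FY ->
  forall p q : X, `|F p - F q| <= `|FX p.1 - FX q.1| + `|FY p.2 - FY q.2|.
Proof.
move=> hq hm [x1 y1] [x2 y2] /=.
have h1 := @lip_x F FX FY hq hm x1 x2 y1.
have h2 := @lip_y F FX FY hq hm x2 y1 y2.
have h3 := ler_distD (F (x2, y1)) (F (x1, y1)) (F (x2, y2)).
lra.
Qed.

Lemma lim_le T (U : set_system T) {PF : ProperFilter U} (u : T -> R) l c :
  u @ U --> l -> (\forall f \near U, u f <= c) -> l <= c.
Proof. move=> ul H; have := @closed_cvg T R U PF u (fun x => x <= c); apply => //; exact: closed_le. Qed.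

Lemma lim_ge T (U : set_system T) {PF : ProperFilter U} (u : T -> R) l c :
  u @ U --> l -> (\forall f \near U, c <= u f) -> c <= l.
Proof. move=> ul H; have := @closed_cvg T R U PF u (fun x => c <= x); apply => //; exact: closed_ge. Qed.

Lemma lim_eq T (U : set_system T) {PF : ProperFilter U} (u : T -> R) l c :
  u @ U --> l -> (\forall f \near U, u f = c) -> l = c.
Proof.
move=> ul H; apply/le_anti/andP; split.
  by apply: (@lim_le T U PF u l c ul); apply: filterS H => f ->.
by apply: (@lim_ge T U PF u l c ul); apply: filterS H => f ->.
Qed.

Lemma vol_cvg (U : set_system {uniform X -> R}) {PF : ProperFilter U} (g : X -> R) :
  (forall p, (fun f : {uniform X -> R} => f p) @ U --> g p) ->
  forall x1 x2 y1 y2, (fun f : {uniform X -> R} => volume2 f x1 x2 y1 y2) @ U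
     --> volume2 g x1 x2 y1 y2.
Proof.
move=> gc x1 x2 y1 y2; rewrite /volume2.
apply: cvgB; [apply: cvgB; [apply: cvgD|]|]; exact: gc.
Qed.

Lemma closQ FX FY (U : set_system {uniform X -> R}) (g : X -> R) :
  ProperFilter U -> U (fun f : {uniform X -> R} => quasi_dist f /\ has_margins f FX FY) ->
  (forall p, (fun f : {uniform X -> R} => f p) @ U --> g p) ->
  quasi_dist g /\ has_margins g FX FY.
Proof.
move=> PU US gc; split; [split|split].
- move=> p; apply/andP; split.
    apply: (@lim_ge _ U PU _ _ _ (gc p)); apply: filterS US => f [[fb _ _ _ _] _].
    by have /andP[] := fb p.
  apply: (@lim_le _ U PU _ _ _ (gc p)); apply: filterS US => f [[fb _ _ _ _] _].
  by have /andP[] := fb p.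
- move=> x; apply: (@lim_eq _ U PU _ _ _ (gc (x, -oo%E))).
  by apply: filterS US => f [[_ h _ _ _] _]; exact: h.
- move=> y; apply: (@lim_eq _ U PU _ _ _ (gc (-oo%E, y))).
  by apply: filterS US => f [[_ _ h _ _] _]; exact: h.
- apply: (@lim_eq _ U PU _ _ _ (gc (+oo%E, +oo%E))).
  by apply: filterS US => f [[_ _ _ h _] _]; exact: h.
- move=> x1 x2 y1 y2 h1 h2 hb.
  apply: (@lim_ge _ U PU _ _ _ (@vol_cvg U PU g gc x1 x2 y1 y2)).
  by apply: filterS US => f [[_ _ _ _ h] _]; exact: h.
- move=> x; apply: (@lim_eq _ U PU _ _ _ (gc (x, +oo%E))).
  by apply: filterS US => f [_ [h _]]; exact: h.
- move=> y; apply: (@lim_eq _ U PU _ _ _ (gc (+oo%E, y))).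
  by apply: filterS US => f [_ [_ h]]; exact: h.
Qed.
End S.

Theorem corollary5 (R : realType) (FX FY : \bar R -> R) :
  univ_dist FX -> univ_dist FY ->
  compact (QSet FX FY) /\ compact (DSet FX FY).
Proof.
move=> [FXb _ _ _] [FYb _ _ _]; split.
- apply: (@compactS R FX FY _ FXb FYb).
  + by move=> f [[fb _ _ _ _] _].
  + by move=> f [hq hm]; exact: (@lipQ R f FX FY hq hm).
  + move=> U g PU US gc; exact: (@closQ R FX FY U g PU US gc).
- apply: (@compactS R FX FY _ FXb FYb).
  + by move=> f [[[fb _ _ _ _] _] _].
  + by move=> f [[hq _] hm]; exact: (@lipQ R f FX FY hq hm).
  + move=> U g PU US gc.
    have [hq hm] : quasi_dist g /\ has_margins g FX FY.
      apply: (@closQ R FX FY U g PU _ gc).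
      by apply: filterS US => f [[hq _] hm].
    split => //; split => // x1 x2 y1 y2 h1 h2.
    apply: (@lim_ge R _ U PU _ _ _ (@vol_cvg R U PU g gc x1 x2 y1 y2)).
    by apply: filterS US => f [[_ h] _]; exact: h.
Qed.
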